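(* Let $\mathcal{C}$ be a triangulated category and let $d=\infty$ or $d$ an odd positive integer. Suppose that to every object $X$ of $\mathcal{C}$ is assigned an element $\rho(X)\in\mathbb{R}(d)$ such that: (a) $\rho(\Sigma X)=q\rho(X)$ for all $X$; (b) $\rho(X\oplus Y)=\rho(X)+\rho(Y)$ for all $X,Y$; (c) for every exact triangle $X\to Y\to Z\rightsquigarrow$ there is $\phi\in\mathbb{R}_{\geq0}(d)$ with $\rho(X)-\rho(Y)+\rho(Z)=(q+1)\phi$. Then for every morphism $f:X\to Y$ the formula $$\rho(f):=\frac{\rho(Y)-\rho(\operatorname{cone}(f))+q\rho(X)}{q+1}$$ (a well-defined quotient in $\mathbb{R}(d)$) determines a $d$-periodic rank function on $\mathcal{C}$. If in addition all $\rho(X)$ lie in $\mathbb{Z}(d)$ and the elements $\phi$ in (c) lie in $\mathbb{Z}(d)$, then the resulting rank function is integral.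
   Context: $\mathbb{R}(d)=\mathbb{R}[q,q^{-1}]$ if $d=\infty$ and $\mathbb{R}[q]/(q^d-1)$ if $d<\infty$; $\mathbb{Z}(d)$ is defined likewise with integer coefficients; $\mathbb{R}_{\geq0}(d)$ is the set of elements represented by (Laurent) polynomials with nonnegative coefficients; $\phi\geq\psi$ means $\phi-\psi\in\mathbb{R}_{\geq0}(d)$. A $d$-periodic rank function on $\mathcal{C}$ (translation $\Sigma$) assigns to each morphism $f$ an element $\rho(f)\in\mathbb{R}_{\geq0}(d)$ such that: $\rho(\Sigma f)=q\rho(f)$; $\rho(f\oplus g)=\rho(f)+\rho(g)$; $\rho(f)+\rho(g)=\rho(\mathrm{id}_Y)$ for each exact triangle $X\xrightarrow{f}Y\xrightarrow{g}Z\rightsquigarrow$; $\rho\begin{pmatrix} f&h\\0&g\end{pmatrix}\geq\rho(f)+\rho(g)$ for $f:X\to Y$, $g:Z\to W$, $h:Z\to Y$; and $\rho(gf)\leq\rho(f)$, $\rho(gf)\leq\rho(g)$ whenever $gf$ is defined. It is integral if all values lie in $\mathbb{Z}_{\geq0}(d)$. *)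

(* Defs.v *)
From HB Require Import structures.
From mathcomp Require Import all_boot all_order all_algebra.
From mathcomp Require Import reals.
Set Implicit Arguments. Unset Strict Implicit. Unset Printing Implicit Defensive.
Import Order.TTheory GRing.Theory Num.Theory.
Local Open Scope ring_scope.

(* Triangulated categories (Stacks Project conventions, Tag 0145).     *)

(* Data: a preadditive category with chosen zero object, chosen binary
   biproducts, a translation functor Sigma and a class of exact triangles. *)
Record TriData := {
  Ob : Type;
  Mor : Ob -> Ob -> zmodType;
  comp : forall X Y Z : Ob, Mor Y Z -> Mor X Y -> Mor X Z;
  idm : forall X : Ob, Mor X X;
  zob : Ob;
  bip : Ob -> Ob -> Ob;
  binl : forall X Y : Ob, Mor X (bip X Y);
  binr : forall X Y : Ob, Mor Y (bip X Y);
  bpl : forall X Y : Ob, Mor (bip X Y) X;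
  bpr : forall X Y : Ob, Mor (bip X Y) Y;
  Sob : Ob -> Ob;
  Shom : forall X Y : Ob, Mor X Y -> Mor (Sob X) (Sob Y);
  tri : forall X Y Z : Ob, Mor X Y -> Mor Y Z -> Mor Z (Sob X) -> Prop
}.

Arguments comp {_ _ _ _}.
Arguments idm {_}.
Arguments zob {_}.
Arguments bip {_}.
Arguments binl {_ _ _}.
Arguments binr {_ _ _}.
Arguments bpl {_ _ _}.
Arguments bpr {_ _ _}.
Arguments Sob {_}.
Arguments Shom {_ _ _}.
Arguments tri {_ _ _ _}.

Section TriCat.
Variable C : TriData.
Local Notation Ob := (Ob C).
Local Notation Mor := (@Mor C).

Definition is_iso (X Y : Ob) (u : Mor X Y) : Prop :=
  exists v : Mor Y X, comp v u = idm X /\ comp u v = idm Y.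

Definition tri_iso (X Y Z X' Y' Z' : Ob)
  (f : Mor X Y) (g : Mor Y Z) (h : Mor Z (Sob X))
  (f' : Mor X' Y') (g' : Mor Y' Z') (h' : Mor Z' (Sob X'))
  (a : Mor X X') (b : Mor Y Y') (c : Mor Z Z') : Prop :=
  [/\ is_iso a, is_iso b & is_iso c] /\
  [/\ comp b f = comp f' a, comp c g = comp g' b &
      comp (Shom a) h = comp h' c].

Record is_triangulated : Prop := {
  comp_assoc : forall X Y Z W (f : Mor X Y) (g : Mor Y Z) (h : Mor Z W),
      comp h (comp g f) = comp (comp h g) f;
  comp_idl : forall X Y (f : Mor X Y), comp (idm Y) f = f;
  comp_idr : forall X Y (f : Mor X Y), comp f (idm X) = f;
  comp_addl : forall X Y Z (f : Mor X Y) (g g' : Mor Y Z),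
      comp (g + g') f = comp g f + comp g' f;
  comp_addr : forall X Y Z (f f' : Mor X Y) (g : Mor Y Z),
      comp g (f + f') = comp g f + comp g f';
  zob_zero : idm (@zob C) = 0;
  bip_ll : forall X Y : Ob, comp (@bpl C X Y) binl = idm X;
  bip_rr : forall X Y : Ob, comp (@bpr C X Y) binr = idm Y;
  bip_lr : forall X Y : Ob, comp (@bpl C X Y) binr = 0;
  bip_rl : forall X Y : Ob, comp (@bpr C X Y) binl = 0;
  bip_id : forall X Y : Ob, comp binl bpl + comp binr bpr = idm (bip X Y);
  Shom_id : forall X : Ob, Shom (idm X) = idm (Sob X);
  Shom_comp : forall X Y Z (f : Mor X Y) (g : Mor Y Z),
      Shom (comp g f) = comp (Shom g) (Shom f);
  Shom_add : forall X Y (f g : Mor X Y), Shom (f + g) = Shom f + Shom g;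
  Shom_bij : forall X Y : Ob, bijective (@Shom C X Y);
  Sob_esurj : forall Y : Ob, exists X (u : Mor (Sob X) Y), is_iso u;
  TR1_iso : forall X Y Z X' Y' Z' (f : Mor X Y) (g : Mor Y Z) (h : Mor Z (Sob X))
      (f' : Mor X' Y') (g' : Mor Y' Z') (h' : Mor Z' (Sob X')) a b c,
      tri_iso f g h f' g' h' a b c -> tri f g h -> tri f' g' h';
  TR1_id : forall X : Ob, tri (idm X) (0 : Mor X (@zob C)) (0 : Mor (@zob C) (Sob X));
  TR1_ext : forall X Y (f : Mor X Y), exists Z (g : Mor Y Z) (h : Mor Z (Sob X)),
      tri f g h;
  TR2 : forall X Y Z (f : Mor X Y) (g : Mor Y Z) (h : Mor Z (Sob X)),
      tri f g h <-> tri g h (- Shom f);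
  TR3 : forall X Y Z X' Y' Z' (f : Mor X Y) (g : Mor Y Z) (h : Mor Z (Sob X))
      (f' : Mor X' Y') (g' : Mor Y' Z') (h' : Mor Z' (Sob X'))
      (u : Mor X X') (v : Mor Y Y'),
      tri f g h -> tri f' g' h' -> comp v f = comp f' u ->
      exists w : Mor Z Z', comp w g = comp g' v /\ comp (Shom u) h = comp h' w;
  TR4 : forall X Y Z Z' X' Y' (f : Mor X Y) (g : Mor Y Z)
      (f' : Mor Y Z') (f'' : Mor Z' (Sob X))
      (h' : Mor Z Y') (h'' : Mor Y' (Sob X))
      (g' : Mor Z X') (g'' : Mor X' (Sob Y)),
      tri f f' f'' -> tri (comp g f) h' h'' -> tri g g' g'' ->
      exists (a : Mor Z' Y') (b : Mor Y' X'),
        [/\ tri a b (comp (Shom f') g''),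
            comp a f' = comp h' g,
            comp h'' a = f'',
            comp b h' = g' &
            comp g'' b = comp (Shom f) h'']
}.

Definition dsum (X Y X' Y' : Ob) (f : Mor X Y) (g : Mor X' Y') :
    Mor (bip X X') (bip Y Y') :=
  comp binl (comp f bpl) + comp binr (comp g bpr).

(* the block matrix [[f, h], [0, g]] : X (+) Z -> Y (+) W *)
Definition upper_mx (X Y Z W : Ob) (f : Mor X Y) (h : Mor Z Y) (g : Mor Z W) :
    Mor (bip X Z) (bip Y W) :=
  comp binl (comp f bpl) + comp binl (comp h bpr) + comp binr (comp g bpr).

End TriCat.

(* The rings R(d).  An element of R(d) is represented by its           *)
(* coefficient function n |-> (coefficient of q^n) : int -> R, which   *)
(* must be finitely supported (d = oo) or d-periodic (d < oo; then the *)
(* coefficient of q^k, 0 <= k < d, in R[q]/(q^d-1) is a k).            *)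

Inductive period := PInf | PFin of nat.

Section Rd.
Variable R : realType.

Definition inRd (d : period) (a : int -> R) : Prop :=
  match d with
  | PInf => exists N : nat, forall n : int, (N < absz n)%N -> a n = 0
  | PFin m => forall n : int, a (n + (m : int)) = a n
  end.

Definition fadd (a b : int -> R) : int -> R := fun n => a n + b n.
Definition fsub (a b : int -> R) : int -> R := fun n => a n - b n.
Definition qmul (a : int -> R) : int -> R := fun n => a (n - 1).
Definition qp1mul (a : int -> R) : int -> R := fadd (qmul a) a.
Definition fnneg (a : int -> R) : Prop := forall n, 0 <= a n.
Definition fintegral (a : int -> R) : Prop := forall n, a n \is a Num.int.
Definition fle (a b : int -> R) : Prop := fnneg (fsub b a).

Definition rank_fun (d : period) (C : TriData)
    (rk : forall X Y : Ob C, Mor X Y -> int -> R) : Prop :=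
  (forall X Y (f : Mor X Y), inRd d (rk X Y f) /\ fnneg (rk X Y f)) /\
  [/\ (forall X Y (f : Mor X Y), rk _ _ (Shom f) = qmul (rk X Y f)),
      (forall X Y X' Y' (f : Mor X Y) (g : Mor X' Y'),
          rk _ _ (dsum f g) = fadd (rk _ _ f) (rk _ _ g)),
      (forall X Y Z (f : Mor X Y) (g : Mor Y Z) (h : Mor Z (Sob X)),
          tri f g h -> fadd (rk _ _ f) (rk _ _ g) = rk _ _ (idm Y)),
      (forall X Y Z W (f : Mor X Y) (g : Mor Z W) (h : Mor Z Y),
          fle (fadd (rk _ _ f) (rk _ _ g)) (rk _ _ (upper_mx f h g))) &
      (forall X Y Z (f : Mor X Y) (g : Mor Y Z),
          fle (rk _ _ (comp g f)) (rk _ _ f) /\ fle (rk _ _ (comp g f)) (rk _ _ g))].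

Definition integral_rank_fun (C : TriData)
    (rk : forall X Y : Ob C, Mor X Y -> int -> R) : Prop :=
  forall X Y (f : Mor X Y), fintegral (rk X Y f).

End Rd.

(* Main.v *)
Require Import Defs.
From HB Require Import structures.
From mathcomp Require Import all_boot all_order all_algebra.
From mathcomp Require Import reals.
From mathcomp Require Import zify ring lra.
Import Order.TTheory GRing.Theory Num.Theory.
Local Open Scope ring_scope.
Set Implicit Arguments. Unset Strict Implicit. Unset Printing Implicit Defensive.

Section Cat.
Variable C : TriData.
Variable HC : is_triangulated C.
Local Notation Ob := (Ob C).
Local Notation Mor := (@Defs.Mor C).
Local Notation comp := Defs.comp.

Lemma cidl X Y (f : Mor X Y) : comp (idm Y) f = f. Proof. exact: (comp_idl HC f). Qed.
Lemma cidr X Y (f : Mor X Y) : comp f (idm X) = f. Proof. exact: (comp_idr HC f). Qed.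
Lemma cA X Y Z W (f : Mor X Y) (g : Mor Y Z) (h : Mor Z W) :
  comp h (comp g f) = comp (comp h g) f. Proof. exact: (comp_assoc HC f g h). Qed.

Lemma zmod_xx0 (V : zmodType) (x : V) : x = x + x -> x = 0.
Proof. move=> H; have: x + x - x = x - x by rewrite -H. by rewrite addrK subrr. Qed.

Lemma comp0l X Y Z (f : Mor X Y) : comp (0 : Mor Y Z) f = 0.
Proof. apply: zmod_xx0; by rewrite -comp_addl // addr0. Qed.
Lemma comp0r X Y Z (g : Mor Y Z) : comp g (0 : Mor X Y) = 0.
Proof. apply: zmod_xx0; by rewrite -comp_addr // addr0. Qed.
Lemma compNl X Y Z (f : Mor X Y) (g : Mor Y Z) : comp (- g) f = - comp g f.
Proof. apply/eqP; rewrite -subr_eq0 opprK -comp_addl // addNr comp0l //. Qed.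
Lemma compNr X Y Z (f : Mor X Y) (g : Mor Y Z) : comp g (- f) = - comp g f.
Proof. apply/eqP; rewrite -subr_eq0 opprK -comp_addr // addNr comp0r //. Qed.
Lemma compBl X Y Z (f : Mor X Y) (g g' : Mor Y Z) : comp (g - g') f = comp g f - comp g' f.
Proof. by rewrite comp_addl // compNl. Qed.
Lemma compBr X Y Z (f f' : Mor X Y) (g : Mor Y Z) : comp g (f - f') = comp g f - comp g f'.
Proof. by rewrite comp_addr // compNr. Qed.
Lemma Shom0 X Y : Shom (0 : Mor X Y) = 0.
Proof. apply: zmod_xx0; by rewrite -Shom_add // addr0. Qed.
Lemma ShomN X Y (f : Mor X Y) : Shom (- f) = - Shom f.
Proof. apply/eqP; rewrite -subr_eq0 opprK -Shom_add // addNr Shom0 //. Qed.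

Definition is_zero (X : Ob) := idm X = 0.

Lemma zero_to X Z (f : Mor X Z) : is_zero Z -> f = 0.
Proof. move=> hz; by rewrite -(cidl f) hz comp0l. Qed.
Lemma zero_from X Z (f : Mor Z X) : is_zero Z -> f = 0.
Proof. move=> hz; by rewrite -(cidr f) hz comp0r. Qed.
Lemma zob_is_zero : is_zero (@zob C).
Proof. exact: zob_zero. Qed.
Lemma Sob_zero X : is_zero X -> is_zero (Sob X).
Proof. by rewrite /is_zero -Shom_id // => ->; rewrite Shom0. Qed.
Lemma bip_zero X Y : is_zero X -> is_zero Y -> is_zero (bip X Y).
Proof.
move=> hx hy; rewrite /is_zero -bip_id //.
by rewrite (zero_from (@binl C X Y) hx) (zero_from (@binr C X Y) hy) !comp0l addr0.
Qed.
Lemma zero_iso X Y (u : Mor X Y) : is_zero X -> is_zero Y -> is_iso u.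
Proof.
move=> hx hy; exists 0; rewrite hx hy; split; exact: zero_to.
Qed.
Lemma iso_id (X : Ob) : is_iso (idm X).
Proof. exists (idm X); by rewrite cidl. Qed.

Lemma tri_rot X Y Z (f : Mor X Y) (g : Mor Y Z) (h : Mor Z (Sob X)) :
  tri f g h -> tri g h (- Shom f).
Proof. by move/(TR2 HC). Qed.

Lemma tri_rot3 X Y Z (f : Mor X Y) (g : Mor Y Z) (h : Mor Z (Sob X)) :
  tri f g h -> tri (- Shom f) (- Shom g) (- Shom h).
Proof. by move=> /tri_rot /tri_rot /tri_rot. Qed.

Lemma tri_iso_zero A B (u : Mor A B) : is_iso u ->
  tri u (0 : Mor B (@zob C)) (0 : Mor (@zob C) (Sob A)).
Proof.
move=> hu; apply: (TR1_iso HC (a := idm A) (b := u) (c := idm (@zob C))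
  _ (TR1_id HC A)).
split; first by split => //; apply: iso_id.
by split; rewrite ?cidl ?cidr ?comp0l ?comp0r.
Qed.

Lemma tri_zero_id (W : Ob) : tri (0 : Mor (@zob C) W) (idm W) (0 : Mor W (Sob (@zob C))).
Proof.
apply/(TR2 HC); rewrite Shom0 oppr0.
apply: (TR1_iso HC (a := idm W) (b := idm W) (c := 0 : Mor (@zob C) (Sob (@zob C)))
  _ (TR1_id HC W)).
split; first by split; [apply: iso_id | apply: iso_id |
  apply: zero_iso; [apply: zob_is_zero | apply: Sob_zero; apply: zob_is_zero]].
by split; rewrite ?cidl ?cidr ?comp0l ?comp0r.
Qed.

Lemma tri_factor X Y Z (f : Mor X Y) (g : Mor Y Z) (h : Mor Z (Sob X)) :
  tri f g h -> forall W (t : Mor Z W), comp t g = 0 -> exists k, t = comp k h.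
Proof.
move=> T W t tg0.
have [w [hw _]] := TR3 HC (u := 0 : Mor Y (@zob C)) (v := t) (tri_rot T) (tri_zero_id W)
  (etrans tg0 (esym (comp0r _ _))).
by exists w; rewrite hw cidl.
Qed.

Definition factors Y Z V (g : Mor Y Z) (h : Mor Z V) :=
  forall W (t : Mor Z W), comp t g = 0 -> exists k : Mor V W, t = comp k h.

Lemma nil_iso Y Z V (g : Mor Y Z) (h : Mor Z V) (e : Mor Z Z) :
  factors g h -> comp e g = g -> comp h e = h -> is_iso e.
Proof.
move=> F eg he.
set n := e - idm Z.
have ng : comp n g = 0 by rewrite compBl eg cidl subrr.
have [k nk] := F _ n ng.
have hn : comp h n = 0 by rewrite compBr he cidr subrr.
have nn : comp n n = 0 by rewrite {1}nk -cA // hn comp0r.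
have E : e = idm Z + n by rewrite /n addrC subrK.
clearbody n; rewrite E.
exists (idm Z - n); split.
- by rewrite comp_addr // !compBl !cidl !cidr nn subr0 subrK.
- by rewrite comp_addl // !compBr !cidl !cidr nn subr0 subrK.
Qed.

Lemma iso_comp X Y Z (f : Mor X Y) (g : Mor Y Z) : is_iso f -> is_iso g -> is_iso (comp g f).
Proof.
move=> [f' [f1 f2]] [g' [g1 g2]]; exists (comp f' g'); split.
- by rewrite cA -(cA g g' f') g1 cidr f1.
- by rewrite cA -(cA f' f g) f2 cidr g2.
Qed.

Lemma iso_two_sided X Y (w : Mor X Y) (w' : Mor Y X) :
  is_iso (comp w' w) -> is_iso (comp w w') -> is_iso w.
Proof.
move=> [a [a1 a2]] [b [b1 b2]].
set L := comp a w'. set Rr := comp w' b.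
have hL : comp L w = idm X by rewrite /L -cA.
have hR : comp w Rr = idm Y by rewrite /Rr cA.
have LR : L = Rr.
  by rewrite -(cidr L) -hR cA // hL cidl.
by exists L; split => //; rewrite LR.
Qed.

Lemma tri_factors X Y Z (f : Mor X Y) (g : Mor Y Z) (h : Mor Z (Sob X)) :
  tri f g h -> factors g h.
Proof. move=> T W t; exact: tri_factor T W t. Qed.

Lemma cone_unique X Y Z Z' (f : Mor X Y) (g : Mor Y Z) (h : Mor Z (Sob X))
  (g' : Mor Y Z') (h' : Mor Z' (Sob X)) :
  tri f g h -> tri f g' h' -> exists w : Mor Z Z', is_iso w.
Proof.
move=> T T'.
have e1 : comp (idm Y) f = comp f (idm X) by rewrite cidl cidr.
have [w [wg hw]] := TR3 HC T T' e1.
have [w' [wg' hw']] := TR3 HC T' T e1.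
rewrite ?(Shom_id HC) ?cidl ?cidr in wg hw wg' hw'.
exists w; apply: (iso_two_sided (w' := w')).
- apply: (nil_iso (tri_factors T)).
  + by rewrite -cA // wg wg'.
  + by rewrite cA // -hw' hw.
- apply: (nil_iso (tri_factors T')).
  + by rewrite -cA // wg' wg.
  + by rewrite cA // -hw hw'.
Qed.

End Cat.

Section Mx.
Variable C : TriData.
Variable HC : is_triangulated C.
Local Notation Ob := (Ob C).
Local Notation Mor := (@Defs.Mor C).
Local Notation comp := Defs.comp.

Lemma caddl X Y Z (f : Mor X Y) (g g' : Mor Y Z) : comp (g + g') f = comp g f + comp g' f.
Proof. exact: (comp_addl HC). Qed.
Lemma caddr X Y Z (f f' : Mor X Y) (g : Mor Y Z) : comp g (f + f') = comp g f + comp g f'.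
Proof. exact: (comp_addr HC). Qed.
Lemma bll (X Y : Ob) : comp (@bpl C X Y) binl = idm X. Proof. exact: (bip_ll HC). Qed.
Lemma brr (X Y : Ob) : comp (@bpr C X Y) binr = idm Y. Proof. exact: (bip_rr HC). Qed.
Lemma blr (X Y : Ob) : comp (@bpl C X Y) binr = 0. Proof. exact: (bip_lr HC). Qed.
Lemma brl (X Y : Ob) : comp (@bpr C X Y) binl = 0. Proof. exact: (bip_rl HC). Qed.
Lemma bll' (X Y W : Ob) (f : Mor W X) : comp (@bpl C X Y) (comp binl f) = f.
Proof. by rewrite (cA HC) bll (cidl HC). Qed.
Lemma brr' (X Y W : Ob) (f : Mor W Y) : comp (@bpr C X Y) (comp binr f) = f.
Proof. by rewrite (cA HC) brr (cidl HC). Qed.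
Lemma blr' (X Y W : Ob) (f : Mor W Y) : comp (@bpl C X Y) (comp binr f) = 0.
Proof. by rewrite (cA HC) blr comp0l. Qed.
Lemma brl' (X Y W : Ob) (f : Mor W X) : comp (@bpr C X Y) (comp binl f) = 0.
Proof. by rewrite (cA HC) brl comp0l. Qed.

Ltac msimp := repeat progress (rewrite ?caddl ?caddr -?(cA HC) ?bll' ?blr' ?brl' ?brr'
  ?bll ?blr ?brl ?brr ?(comp0l HC) ?(comp0r HC) ?(compNl HC) ?(compNr HC) ?(cidl HC) ?(cidr HC) ?addr0 ?add0r ?oppr0).

Lemma bip_monic (X Y W : Ob) (m m' : Mor W (bip X Y)) :
  comp bpl m = comp bpl m' -> comp bpr m = comp bpr m' -> m = m'.
Proof.
move=> h1 h2; rewrite -(cidl HC m) -(cidl HC m') -(bip_id HC) !caddl -!(cA HC).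
by rewrite h1 h2.
Qed.
Lemma bip_epic (X Y W : Ob) (m m' : Mor (bip X Y) W) :
  comp m binl = comp m' binl -> comp m binr = comp m' binr -> m = m'.
Proof.
move=> h1 h2; rewrite -(cidr HC m) -(cidr HC m') -(bip_id HC) !caddr !(cA HC).
by rewrite h1 h2.
Qed.
Lemma mx_ext (X1 X2 Y1 Y2 : Ob) (m m' : Mor (bip X1 X2) (bip Y1 Y2)) :
  comp bpl (comp m binl) = comp bpl (comp m' binl) ->
  comp bpl (comp m binr) = comp bpl (comp m' binr) ->
  comp bpr (comp m binl) = comp bpr (comp m' binl) ->
  comp bpr (comp m binr) = comp bpr (comp m' binr) -> m = m'.
Proof.
move=> h1 h2 h3 h4; apply: bip_epic; apply: bip_monic => //.
Qed.

Lemma upper_fact (X Y Z W : Ob) (f : Mor X Y) (h : Mor Z Y) (g : Mor Z W) :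
  upper_mx f h g = comp (dsum (idm Y) g) (comp (upper_mx (idm Y) h (idm Z)) (dsum f (idm Z))).
Proof. apply: mx_ext; rewrite /upper_mx /dsum; msimp => //. Qed.


Lemma Sc (X Y Z : Ob) (f : Mor X Y) (g : Mor Y Z) : comp (Shom g) (Shom f) = Shom (comp g f).
Proof. by rewrite (Shom_comp HC). Qed.
Lemma Sc' (X Y Z W : Ob) (f : Mor X Y) (g : Mor Y Z) (x : Mor W (Sob X)) :
  comp (Shom g) (comp (Shom f) x) = comp (Shom (comp g f)) x.
Proof. by rewrite (cA HC) Sc. Qed.
Lemma Sid (X : Ob) : Shom (idm X) = idm (Sob X). Proof. exact: (Shom_id HC). Qed.

Ltac msimpS := repeat progress (rewrite ?caddl ?caddr -?(cA HC) ?bll' ?blr' ?brl' ?brr'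
  ?bll ?blr ?brl ?brr ?Sc' ?Sc ?bll ?blr ?brl ?brr ?Sid ?(Shom0 HC) ?(comp0l HC) ?(comp0r HC) ?(compNl HC) ?(compNr HC)
  ?(cidl HC) ?(cidr HC) ?addr0 ?add0r ?oppr0).

Definition mx (X1 X2 Y1 Y2 : Ob) (a : Mor X1 Y1) (b : Mor X2 Y1) (c : Mor X1 Y2) (e : Mor X2 Y2) :
  Mor (bip X1 X2) (bip Y1 Y2) :=
  comp binl (comp a bpl) + comp binl (comp b bpr) + comp binr (comp c bpl) + comp binr (comp e bpr).

Definition swap (X Y : Ob) : Mor (bip X Y) (bip Y X) := mx 0 (idm Y) (idm X) 0.

Lemma swap_iso (X Y : Ob) : is_iso (swap X Y).
Proof.
exists (swap Y X); split; apply: mx_ext; rewrite /swap /mx; msimp => //.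
Qed.

Lemma lower_iso (X Y : Ob) (f : Mor X Y) : is_iso (mx (idm X) 0 f (idm Y)).
Proof.
exists (mx (idm X) 0 (- f) (idm Y)); split; apply: mx_ext; rewrite /mx; msimp => //;
  by rewrite ?addNr ?addrN.
Qed.

Lemma upper_iso (Y Z : Ob) (h : Mor Z Y) : is_iso (upper_mx (idm Y) h (idm Z)).
Proof.
exists (upper_mx (idm Y) (- h) (idm Z)); split; apply: mx_ext; rewrite /upper_mx; msimp => //;
  by rewrite ?addNr ?addrN.
Qed.

Lemma comp_fact1 (X Y Z : Ob) (f : Mor X Y) (g : Mor Y Z) :
  upper_mx (comp g f) g (0 : Mor Y (@zob C)) =
  comp (swap (@zob C) Z) (comp (dsum (0 : Mor X (@zob C)) g) (mx (idm X) 0 f (idm Y))).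
Proof. apply: mx_ext; rewrite /upper_mx /dsum /swap /mx; msimp => //. Qed.

Lemma comp_fact2 (X Y Z : Ob) (f : Mor X Y) (g : Mor Y Z) :
  upper_mx (0 : Mor (@zob C) Y) f (comp g f) =
  comp (mx (idm Y) 0 g (idm Z)) (comp (swap Z Y) (dsum (0 : Mor (@zob C) Z) f)).
Proof. apply: mx_ext; rewrite /upper_mx /dsum /swap /mx; msimp => //. Qed.


Lemma dsum_cone (X Y Z X' Y' Z' Q : Ob) (f : Mor X Y) (a : Mor Y Z) (b : Mor Z (Sob X))
  (g : Mor X' Y') (a' : Mor Y' Z') (b' : Mor Z' (Sob X'))
  (c : Mor (bip Y Y') Q) (e : Mor Q (Sob (bip X X'))) :
  tri f a b -> tri g a' b' -> tri (dsum f g) c e -> exists w : Mor Q (bip Z Z'), is_iso w.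
Proof.
move=> Tf Tg Ts.
have [w1 [w1c hw1]] := TR3 HC (u := bpl) (v := bpl) Ts Tf
  (ltac:(rewrite /dsum; msimpS => //)).
have [w2 [w2c hw2]] := TR3 HC (u := bpr) (v := bpr) Ts Tg
  (ltac:(rewrite /dsum; msimpS => //)).
have [s1 [s1a hs1]] := TR3 HC (u := binl) (v := binl) Tf Ts
  (ltac:(rewrite /dsum; msimpS => //)).
have [s2 [s2a hs2]] := TR3 HC (u := binr) (v := binr) Tg Ts
  (ltac:(rewrite /dsum; msimpS => //)).
set w := comp binl w1 + comp binr w2.
set s := comp s1 bpl + comp s2 bpr.
set A := comp (@binl C Z Z') (comp a bpl) + comp binr (comp a' bpr).
set E := comp (Shom (@binl C X X')) (comp b bpl) + comp (Shom binr) (comp b' bpr).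
have wc : comp w c = A.
  by rewrite /w /A caddl -!(cA HC) w1c w2c.
have sA : comp s A = c.
  rewrite /s /A; msimp; rewrite (cA HC _ a s1) s1a (cA HC _ a' s2) s2a -!(cA HC).
  by rewrite -caddr (bip_id HC) (cidr HC).
have Ew : comp E w = e.
  rewrite /E /w; msimp; rewrite -hw1 -hw2; msimpS.
  by rewrite -caddl -Shom_add // (bip_id HC) Sid (cidl HC).
have es : comp e s = E.
  by rewrite /s /E caddr !(cA HC) -hs1 -hs2 -!(cA HC).
exists w; apply: (iso_two_sided HC (w' := s)).
- apply: (nil_iso HC (tri_factors HC Ts)).
  + by rewrite -(cA HC) wc sA.
  + by rewrite (cA HC) es Ew.
- have FAE : factors A E.
    move=> W t tA.
    have t1 : comp (comp t binl) a = 0.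
      rewrite -(cA HC) -[comp binl a](_ : comp A binl = _) ?(cA HC) ?tA ?comp0l //.
      by rewrite /A; msimp.
    have t2 : comp (comp t binr) a' = 0.
      rewrite -(cA HC) -[comp binr a'](_ : comp A binr = _) ?(cA HC) ?tA ?comp0l //.
      by rewrite /A; msimp.
    have [k1 hk1] := tri_factor HC Tf t1.
    have [k2 hk2] := tri_factor HC Tg t2.
    exists (comp k1 (Shom bpl) + comp k2 (Shom bpr)).
    apply: bip_epic.
    + rewrite hk1 /E; msimpS => //.
    + rewrite hk2 /E; msimpS => //.
  apply: (nil_iso HC FAE).
  + by rewrite -(cA HC) sA wc.
  + by rewrite (cA HC) Ew es.
Qed.

End Mx.

Section Alg.
Variable R : realType.
Variable d : period.
Hypothesis hd : d = PInf \/ exists n : nat, d = PFin n /\ odd n.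

Definition fz : int -> R := fun _ => 0.

Lemma inRd_sub (a b : int -> R) : inRd d a -> inRd d b -> inRd d (fsub a b).
Proof.
case: d => [|m] /=.
- move=> [N1 H1] [N2 H2]; exists (maxn N1 N2) => n hn.
  rewrite /fsub H1 ?H2 ?subr0 //.
  + by apply: leq_ltn_trans hn; apply: leq_maxr.
  + by apply: leq_ltn_trans hn; apply: leq_maxl.
- by move=> H1 H2 n; rewrite /fsub H1 H2.
Qed.

Lemma inRd_add (a b : int -> R) : inRd d a -> inRd d b -> inRd d (fadd a b).
Proof.
case: d => [|m] /=.
- move=> [N1 H1] [N2 H2]; exists (maxn N1 N2) => n hn.
  rewrite /fadd H1 ?H2 ?addr0 //.
  + by apply: leq_ltn_trans hn; apply: leq_maxr.
  + by apply: leq_ltn_trans hn; apply: leq_maxl.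
- by move=> H1 H2 n; rewrite /fadd H1 H2.
Qed.

Lemma qp1_cancel0 (a : int -> R) : inRd d a -> (forall n, qp1mul a n = 0) ->
  forall n, a n = 0.
Proof.
rewrite /qp1mul /fadd /qmul => ha H.
have step : forall n, a n = - a (n + 1).
  move=> n; have := H (n + 1); rewrite addrK => /eqP; rewrite addr_eq0 => /eqP //.
case: hd => [hdi|[m [hdm odm]]]; move: ha; rewrite ?hdi ?hdm /=.
- move=> [N HN] n.
  have key : forall k : nat, forall n, a (n + k%:Z) = 0 -> a n = 0.
    elim=> [|k IH] n0; first by rewrite addr0.
    move=> h; rewrite step (IH (n0 + 1)) ?oppr0 //.
    by rewrite -addrA -intS.
  apply: (key (N + `|n|%N).+1 n); apply: HN; lia.
- move=> Hp n.
  have key : forall k : nat, forall n, a (n + k%:Z) = (-1) ^+ k * a n.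
    elim=> [|k IH] n0; first by rewrite addr0 expr0 mul1r.
    have -> : n0 + k.+1%:Z = n0 + k%:Z + 1 by lia.
    by rewrite exprS -mulrA -IH mulN1r (step (n0 + k%:Z)) opprK.
  have := key m n; rewrite Hp -signr_odd odm expr1 mulN1r => /eqP.
  by rewrite -subr_eq0 opprK -mulr2n mulrn_eq0 /= => /eqP.
Qed.

Lemma qp1_cancel (a b : int -> R) : inRd d a -> inRd d b -> qp1mul a = qp1mul b -> a = b.
Proof.
move=> ha hb E; apply: boolp.funext => n; apply/eqP; rewrite -subr_eq0; apply/eqP.
apply: (qp1_cancel0 (inRd_sub ha hb)) => k.
have := congr1 (fun f => f k) E; rewrite /qp1mul /fadd /qmul /fsub => E'.
by rewrite addrACA -opprD E' subrr.
Qed.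
Lemma inRd_qmul (a : int -> R) : inRd d a -> inRd d (qmul a).
Proof.
case: d => [|m] /=.
- move=> [N H]; exists N.+1 => n hn; rewrite /qmul H //; lia.
- by move=> H n; rewrite /qmul addrAC H.
Qed.
End Alg.

Section Main.
Variable R : realType.
Variable C : TriData.
Variable HC : is_triangulated C.
Variable d : period.
Hypothesis hd : d = PInf \/ exists n : nat, d = PFin n /\ odd n.
Variable rho : Ob C -> int -> R.
Hypothesis rho_val : forall X, inRd d (rho X).
Hypothesis rho_S : forall X, rho (Sob X) = qmul (rho X).
Hypothesis rho_sum : forall X Y, rho (bip X Y) = fadd (rho X) (rho Y).
Hypothesis rho_tri : forall X Y Z (f : Mor X Y) (g : Mor Y Z) (h : Mor Z (Sob X)),
      tri f g h ->
      exists phi : int -> R, [/\ inRd d phi, fnneg phi &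
        fadd (fsub (rho X) (rho Y)) (rho Z) = qp1mul phi].
Local Notation Ob := (Ob C).
Local Notation Mor := (@Defs.Mor C).
Local Notation comp := Defs.comp.

Lemma ptw (F G : int -> R) n : F = G -> F n = G n.
Proof. by move=> ->. Qed.

Lemma nn_zero (a b : int -> R) : inRd d a -> inRd d b -> fnneg a -> fnneg b ->
  (forall n, qp1mul a n + qp1mul b n = 0) -> forall n, a n = 0.
Proof.
move=> va vb na nb H n.
have Hs : forall k, qp1mul (fadd a b) k = 0.
  by move=> k; have := H k; rewrite /qp1mul /fadd /qmul => E; lra.
have := qp1_cancel0 hd (inRd_add va vb) Hs n.
by rewrite /fadd => /eqP; rewrite paddr_eq0 // => /andP[/eqP].
Qed.

Lemma rho_zob : forall n, rho (@zob C) n = 0.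
Proof.
have [p0 [v0 n0 e0]] := rho_tri (TR1_id HC (@zob C)).
pose B3 := bip (bip (@zob C) (@zob C)) (@zob C).
have hz : is_zero B3.
  have z0 : is_zero (@zob C) := zob_is_zero HC.
  exact: (bip_zero HC (bip_zero HC z0 z0) z0).
have iu : is_iso (0 : Mor (@zob C) B3) by exact: (zero_iso HC 0 (zob_is_zero HC) hz).
have [p1 [v1 n1 e1]] := rho_tri (tri_iso_zero HC iu).
rewrite /B3 !rho_sum in e1.
have H : forall k, qp1mul p0 k + qp1mul p1 k = 0.
  move=> k; have := ptw k e0; have := ptw k e1.
  rewrite /qp1mul /fadd /fsub /qmul => <- <-; lra.
have Z0 := nn_zero v0 v1 n0 n1 H.
move=> n; have := ptw n e0; rewrite /qp1mul /fadd /fsub /qmul !Z0 => E; lra.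
Qed.

Lemma rho_zobF : rho (@zob C) = fz R.
Proof. apply: boolp.funext => n; exact: rho_zob. Qed.

Lemma rho_iso (A B : Ob) (u : Mor A B) : is_iso u -> rho A = rho B.
Proof.
move=> iu; have iv : exists v : Mor B A, is_iso v.
  by case: iu => v [h1 h2]; exists v, u.
case: iv => v iv.
have [p1 [v1 n1 e1]] := rho_tri (tri_iso_zero HC iu).
have [p2 [v2 n2 e2]] := rho_tri (tri_iso_zero HC iv).
rewrite rho_zobF in e1 e2.
have H : forall k, qp1mul p1 k + qp1mul p2 k = 0.
  move=> k; have := ptw k e1; have := ptw k e2.
  rewrite /qp1mul /fadd /fsub /qmul /fz => <- <-; lra.
have Z0 := nn_zero v1 v2 n1 n2 H.
apply: boolp.funext => n; have := ptw n e1.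
rewrite /qp1mul /fadd /fsub /qmul /fz !Z0 => E; lra.
Qed.

Definition cone_ob (X Y : Ob) (f : Mor X Y) : Ob := projT1 (boolp.cid (TR1_ext HC f)).
Lemma cone_tri (X Y : Ob) (f : Mor X Y) :
  exists (g : Mor Y (cone_ob f)) (h : Mor (cone_ob f) (Sob X)), tri f g h.
Proof. exact: (projT2 (boolp.cid (TR1_ext HC f))). Qed.
Definition rc (X Y : Ob) (f : Mor X Y) := rho (cone_ob f).

Lemma rc_spec (X Y Z : Ob) (f : Mor X Y) (g : Mor Y Z) (h : Mor Z (Sob X)) :
  tri f g h -> rho Z = rc f.
Proof.
move=> T; have [g' [h' T']] := cone_tri f.
have [w iw] := cone_unique HC T T'; exact: rho_iso iw.
Qed.

Definition Ef (X Y : Ob) (f : Mor X Y) := fadd (fsub (rho Y) (rc f)) (qmul (rho X)).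

Definition rk_spec (X Y : Ob) (f : Mor X Y) (psi : int -> R) :=
  [/\ inRd d psi, fnneg psi, Ef f = qp1mul psi &
     exists Z (g : Mor Y Z) (h : Mor Z (Sob X)), tri f g h /\
       fadd (fsub (rho Y) (rho Z)) (rho (Sob X)) = qp1mul psi].

Lemma rk_ex (X Y : Ob) (f : Mor X Y) : exists psi, rk_spec f psi.
Proof.
have [g [h T]] := cone_tri f.
have [p [vp np ep]] := rho_tri (tri_rot HC T).
exists p; split => //; last by exists (cone_ob f), g, h.
by rewrite -ep /Ef rho_S.
Qed.

Definition rk (X Y : Ob) (f : Mor X Y) : int -> R := projT1 (boolp.cid (rk_ex f)).
Lemma rkP (X Y : Ob) (f : Mor X Y) : rk_spec f (rk f).
Proof. exact: (projT2 (boolp.cid (rk_ex f))). Qed.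

Lemma rk_val (X Y : Ob) (f : Mor X Y) : inRd d (rk f).
Proof. by case: (rkP f). Qed.
Lemma rk_nn (X Y : Ob) (f : Mor X Y) : fnneg (rk f).
Proof. by case: (rkP f). Qed.
Lemma rk_E (X Y : Ob) (f : Mor X Y) : qp1mul (rk f) = Ef f.
Proof. by case: (rkP f). Qed.

Lemma rk_char (X Y : Ob) (f : Mor X Y) psi : inRd d psi -> qp1mul psi = Ef f -> rk f = psi.
Proof. move=> vp ep; apply: (qp1_cancel hd) => //; [exact: rk_val | by rewrite rk_E]. Qed.

Lemma rk_tri (X Y Z : Ob) (f : Mor X Y) (g : Mor Y Z) (h : Mor Z (Sob X)) :
  tri f g h -> qp1mul (rk f) = fadd (fsub (rho Y) (rho Z)) (qmul (rho X)).
Proof. by move=> T; rewrite rk_E /Ef (rc_spec T). Qed.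

Lemma rc_iso (X Y X' Y' : Ob) (f : Mor X Y) (u : Mor Y Y') (v : Mor X' X) :
  is_iso u -> is_iso v -> rc (comp u (comp f v)) = rc f.
Proof.
move=> iu iv; have [g [h T]] := cone_tri f.
have iu' := iu; have iv' := iv.
case: iu' => u' [u'u uu']; case: iv' => v' [v'v vv'].
have iv2 : is_iso v' by exists v.
have TI : tri_iso f g h (comp u (comp f v)) (comp g u') (comp (Shom v') h) v' u
  (idm (cone_ob f)).
  split; first by split => //; exact: iso_id.
  split.
  - by rewrite -!(cA HC) vv' (cidr HC).
  - by rewrite (cidl HC) -(cA HC) u'u (cidr HC).
  - by rewrite (cidr HC).
have T' := TR1_iso HC TI T.
by rewrite -(rc_spec T').
Qed.

Lemma rk_iso (X Y X' Y' : Ob) (f : Mor X Y) (u : Mor Y Y') (v : Mor X' X) :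
  is_iso u -> is_iso v -> rk (comp u (comp f v)) = rk f.
Proof.
move=> iu iv; apply: rk_char; first exact: rk_val.
by rewrite rk_E /Ef (rc_iso f iu iv) (rho_iso iu) (rho_iso iv).
Qed.

Lemma rk_isol (X Y Y' : Ob) (f : Mor X Y) (u : Mor Y Y') : is_iso u -> rk (comp u f) = rk f.
Proof. move=> iu; rewrite -{1}(cidr HC f); exact: rk_iso iu (iso_id HC _). Qed.
Lemma rk_isor (X Y X' : Ob) (f : Mor X Y) (v : Mor X' X) : is_iso v -> rk (comp f v) = rk f.
Proof. move=> iv; rewrite -(cidl HC (comp f v)); exact: rk_iso (iso_id HC _) iv. Qed.

Lemma rc_id (X : Ob) : rc (idm X) = fz R.
Proof. by rewrite -(rc_spec (TR1_id HC X)) rho_zobF. Qed.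

Lemma rc_zdom (Y : Ob) : rc (0 : Mor (@zob C) Y) = rho Y.
Proof. by rewrite -(rc_spec (tri_zero_id HC Y)). Qed.

Lemma rc_zcod (X : Ob) : rc (0 : Mor X (@zob C)) = rho (Sob X).
Proof. by rewrite -(rc_spec (tri_rot HC (TR1_id HC X))). Qed.

Lemma qp1_fz : qp1mul (fz R) = fz R.
Proof. by apply: boolp.funext => n; rewrite /qp1mul /fadd /qmul /fz addr0. Qed.

Lemma inRd_fz : inRd d (fz R).
Proof. by case: d => [|m] /=; [exists 0%N|]. Qed.

Lemma rk_zdom (Y : Ob) : rk (0 : Mor (@zob C) Y) = fz R.
Proof.
apply: rk_char; first exact: inRd_fz.
rewrite qp1_fz /Ef rc_zdom rho_zobF; apply: boolp.funext => n.
rewrite /fadd /fsub /qmul /fz; lra.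
Qed.

Lemma rk_zcod (X : Ob) : rk (0 : Mor X (@zob C)) = fz R.
Proof.
apply: rk_char; first exact: inRd_fz.
rewrite qp1_fz /Ef rc_zcod rho_zobF rho_S; apply: boolp.funext => n.
rewrite /fadd /fsub /qmul /fz; lra.
Qed.

Lemma rc_dsum (X Y X' Y' : Ob) (f : Mor X Y) (g : Mor X' Y') :
  rc (dsum f g) = fadd (rc f) (rc g).
Proof.
have [a [b Tf]] := cone_tri f.
have [a' [b' Tg]] := cone_tri g.
have [c [e Ts]] := cone_tri (dsum f g).
have [w iw] := dsum_cone HC Tf Tg Ts.
by rewrite /rc (rho_iso iw) rho_sum.
Qed.

Lemma rc_S (X Y : Ob) (f : Mor X Y) : rc (Shom f) = qmul (rc f).
Proof.
have [g [h T]] := cone_tri f.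
have T3 := tri_rot3 HC T.
have -> : Shom f = comp (- idm (Sob Y)) (comp (- Shom f) (idm (Sob X))).
  by rewrite (cidr HC) (compNl HC) (cidl HC) opprK.
rewrite rc_iso; last exact: iso_id.
  by rewrite -(rc_spec T3) rho_S.
by exists (- idm (Sob Y)); rewrite (compNl HC) (compNr HC) (cidl HC) opprK.
Qed.

Lemma rc_isol (X Y Y' : Ob) (f : Mor X Y) (u : Mor Y Y') : is_iso u -> rc (comp u f) = rc f.
Proof. move=> iu; rewrite -{1}(cidr HC f); exact: rc_iso iu (iso_id HC _). Qed.

Lemma P_S (X Y : Ob) (f : Mor X Y) : rk (Shom f) = qmul (rk f).
Proof.
apply: rk_char; first by apply: inRd_qmul; exact: rk_val.
have -> : qp1mul (qmul (rk f)) = qmul (qp1mul (rk f)) by [].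
by rewrite rk_E /Ef rc_S !rho_S.
Qed.

Lemma P_sum (X Y X' Y' : Ob) (f : Mor X Y) (g : Mor X' Y') :
  rk (dsum f g) = fadd (rk f) (rk g).
Proof.
apply: rk_char; first by apply: inRd_add; exact: rk_val.
rewrite /Ef rc_dsum !rho_sum; apply: boolp.funext => n.
have := ptw n (rk_E f); have := ptw n (rk_E g).
rewrite /qp1mul /Ef /fadd /fsub /qmul => E1 E2; lra.
Qed.

Lemma P_tri (X Y Z : Ob) (f : Mor X Y) (g : Mor Y Z) (h : Mor Z (Sob X)) :
  tri f g h -> fadd (rk f) (rk g) = rk (idm Y).
Proof.
move=> T; symmetry; apply: rk_char; first by apply: inRd_add; exact: rk_val.
rewrite /Ef rc_id; apply: boolp.funext => n.
have := ptw n (rk_tri T); have := ptw n (rk_tri (tri_rot HC T)).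
rewrite rho_S /qp1mul /fadd /fsub /qmul /fz => E1 E2; lra.
Qed.

Lemma P_upper (X Y Z W : Ob) (f : Mor X Y) (g : Mor Z W) (h : Mor Z Y) :
  fle (fadd (rk f) (rk g)) (rk (upper_mx f h g)).
Proof.
set M1 := comp (upper_mx (idm Y) h (idm Z)) (dsum f (idm Z)).
set M2 := dsum (idm Y) g.
have [g1 [h1 T1]] := cone_tri M1.
have [g12 [h12 T12]] := cone_tri (comp M2 M1).
have [g2 [h2 T2]] := cone_tri M2.
have [a [b [Tab _ _ _ _]]] := TR4 HC T1 T12 T2.
have [p [vp np ep]] := rho_tri Tab.
have e1 : rho (cone_ob M1) = rc f.
  rewrite -/(rc M1) /M1 rc_isol ?rc_dsum ?rc_id; last exact: upper_iso.
  by apply: boolp.funext => n; rewrite /fadd /fz addr0.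
have e2 : rho (cone_ob M2) = rc g.
  rewrite -/(rc M2) /M2 rc_dsum rc_id.
  by apply: boolp.funext => n; rewrite /fadd /fz add0r.
have e12 : rho (cone_ob (comp M2 M1)) = rc (upper_mx f h g).
  by rewrite (upper_fact HC f h g).
rewrite e1 e2 e12 in ep.
rewrite /fle; have -> : fsub (rk (upper_mx f h g)) (fadd (rk f) (rk g)) = p.
  apply: (qp1_cancel hd); first by apply: inRd_sub; [exact: rk_val | apply: inRd_add; exact: rk_val].
    done.
  apply: boolp.funext => n.
  have := ptw n ep; have := ptw (n - 1) ep.
  have := ptw n (rk_E (upper_mx f h g)); have := ptw n (rk_E f); have := ptw n (rk_E g).
  rewrite /qp1mul /Ef /fadd /fsub /qmul !rho_sum /fadd => E0 E1 E2 E3 E4.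
  lra.
done.
Qed.

Lemma P_comp (X Y Z : Ob) (f : Mor X Y) (g : Mor Y Z) :
  fle (rk (comp g f)) (rk f) /\ fle (rk (comp g f)) (rk g).
Proof.
split.
- have := P_upper (0 : Mor (@zob C) Y) (comp g f) f.
  rewrite (comp_fact2 HC f g) (rk_isol _ (lower_iso HC g)) (rk_isol _ (swap_iso HC _ _)).
  rewrite P_sum !rk_zdom /fle /fnneg /fsub /fadd /fz => H n.
  by have := H n; rewrite !add0r.
- have := P_upper (comp g f) (0 : Mor Y (@zob C)) g.
  rewrite (comp_fact1 HC f g) (rk_isol _ (swap_iso HC _ _)) (rk_isor _ (lower_iso HC f)).
  rewrite P_sum !rk_zcod /fle /fnneg /fsub /fadd /fz => H n.
  by have := H n; rewrite !addr0 add0r.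
Qed.

Lemma main_sec :
  exists rk : forall X Y : Ob, Mor X Y -> int -> R,
    [/\ (forall X Y Z (f : Mor X Y) (g : Mor Y Z) (h : Mor Z (Sob X)),
           tri f g h ->
           qp1mul (rk X Y f) = fadd (fsub (rho Y) (rho Z)) (qmul (rho X))),
        (forall rk' : forall X Y : Ob, Mor X Y -> int -> R,
           (forall X Y (f : Mor X Y), inRd d (rk' X Y f)) ->
           (forall X Y Z (f : Mor X Y) (g : Mor Y Z) (h : Mor Z (Sob X)),
              tri f g h ->
              qp1mul (rk' X Y f) = fadd (fsub (rho Y) (rho Z)) (qmul (rho X))) ->
           forall X Y (f : Mor X Y), rk' X Y f = rk X Y f),
        rank_fun d rk &
        ((forall X, fintegral (rho X)) ->
         (forall X Y Z (f : Mor X Y) (g : Mor Y Z) (h : Mor Z (Sob X)),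
            tri f g h -> forall phi : int -> R, inRd d phi -> fnneg phi ->
            fadd (fsub (rho X) (rho Y)) (rho Z) = qp1mul phi -> fintegral phi) ->
         integral_rank_fun rk)].
Proof.
exists rk; split.
- by move=> X Y Z f g h T; exact: rk_tri T.
- move=> rk' v' e' X Y f.
  have [g [h T]] := cone_tri f.
  apply: (qp1_cancel hd); [exact: v' | exact: rk_val |].
  by rewrite (e' _ _ _ _ _ _ T) (rk_tri T).
- split; first by move=> X Y f; split; [exact: rk_val | exact: rk_nn].
  split.
  + by move=> X Y f; exact: P_S.
  + by move=> X Y X' Y' f g; exact: P_sum.
  + by move=> X Y Z f g h T; exact: P_tri T.
  + by move=> X Y Z W f g h; exact: P_upper.
  + by move=> X Y Z f g; exact: P_comp.
- move=> _ Hint X Y f.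
  case: (rkP f) => v n _ [Z [g [h [T E]]]].
  exact: (Hint _ _ _ _ _ _ (tri_rot HC T) _ v n E).
Qed.

End Main.


Unset Implicit Arguments.

Theorem proposition2p12 (R : realType) (C : TriData) (HC : is_triangulated C)
  (d : period) (hd : d = PInf \/ exists n : nat, d = PFin n /\ odd n)
  (rho : Ob C -> int -> R)
  (rho_val : forall X, inRd d (rho X))
  (rho_S : forall X, rho (Sob X) = qmul (rho X))
  (rho_sum : forall X Y, rho (bip X Y) = fadd (rho X) (rho Y))
  (rho_tri : forall X Y Z (f : Mor X Y) (g : Mor Y Z) (h : Mor Z (Sob X)),
      tri f g h ->
      exists phi : int -> R, [/\ inRd d phi, fnneg phi &
        fadd (fsub (rho X) (rho Y)) (rho Z) = qp1mul phi]) :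
  exists rk : forall X Y : Ob C, Mor X Y -> int -> R,
    [/\ (* rk f = (rho Y - rho (cone f) + q rho X) / (q + 1) *)
        (forall X Y Z (f : Mor X Y) (g : Mor Y Z) (h : Mor Z (Sob X)),
           tri f g h ->
           qp1mul (rk X Y f) = fadd (fsub (rho Y) (rho Z)) (qmul (rho X))),
        (* the quotient is well defined (unique in R(d)) *)
        (forall rk' : forall X Y : Ob C, Mor X Y -> int -> R,
           (forall X Y (f : Mor X Y), inRd d (rk' X Y f)) ->
           (forall X Y Z (f : Mor X Y) (g : Mor Y Z) (h : Mor Z (Sob X)),
              tri f g h ->
              qp1mul (rk' X Y f) = fadd (fsub (rho Y) (rho Z)) (qmul (rho X))) ->
           forall X Y (f : Mor X Y), rk' X Y f = rk X Y f),
        rank_fun d rk &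
        ((forall X, fintegral (rho X)) ->
         (forall X Y Z (f : Mor X Y) (g : Mor Y Z) (h : Mor Z (Sob X)),
            tri f g h -> forall phi : int -> R, inRd d phi -> fnneg phi ->
            fadd (fsub (rho X) (rho Y)) (rho Z) = qp1mul phi -> fintegral phi) ->
         integral_rank_fun rk)].
Proof.
exact: (@main_sec R C HC d hd rho rho_S rho_sum rho_tri).
Qed.
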